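(* Let $M_n=S_n\rtimes S_n$ be the semidirect product in which the second factor acts on the first (normal) factor by conjugation. Let $s_i$ denote the transposition $(i\ i{+}1)$ in the first factor and $t_i$ the transposition $(i\ i{+}1)$ in the second factor, $i=1,\dots,n-1$. Then $M_n$ admits the presentation with generators $s_i,t_i$ ($i=1,\dots,n-1$) and relations: $t_i^2=s_i^2=1$ ($1\le i\le n-1$); $s_is_j=s_js_i$ and $t_it_j=t_jt_i$ ($|i-j|\geq2$); $s_is_{i+1}s_i=s_{i+1}s_is_{i+1}$ and $t_it_{i+1}t_i=t_{i+1}t_it_{i+1}$ ($1\le i\le n-2$); $t_is_jt_i=s_j$ ($|i-j|\geq 2$); $t_is_it_i=s_i$ ($1\le i\le n-1$); $t_{i+1}s_it_{i+1}=s_{i+1}s_is_{i+1}$ ($1\le i\le n-2$); $t_{i-1}s_it_{i-1}=s_{i-1}s_is_{i-1}$ ($2\le i\le n-1$). *)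

(* Defs.v *)
From HB Require Import structures.
From mathcomp Require Import all_boot all_fingroup.
Set Implicit Arguments. Unset Strict Implicit. Unset Printing Implicit Defensive.
Local Open Scope group_scope.

(* Adjacent transposition (i i+1) of {0,..,n-1} (0-based: s_(i+1) of the paper);
   only used for i.+1 < n, where it is the genuine transposition. *)
Definition adjT (n i : nat) : 'S_n :=
  match n return 'S_n with
  | 0 => 1
  | m.+1 => tperm (inord i : 'I_m.+1) (inord i.+1)
  end.

Definition Mn (n : nat) := sdprod_by (conjg_groupAction (perm_of 'I_n)).

(* s_i and t_i (0-based index i, i.e. the paper's s_(i+1), t_(i+1)). *)
Definition sgen (n i : nat) : Mn n := sdpair1 (conjg_groupAction (perm_of 'I_n)) (adjT n i).
Definition tgen (n i : nat) : Mn n := sdpair2 (conjg_groupAction (perm_of 'I_n)) (adjT n i).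

Definition far (i j : nat) : bool := (i.+2 <= j) || (j.+2 <= i).

Definition Mrels (G : groupType) (n : nat) (s t : nat -> G) : Prop :=
  (forall i, i < n.-1 -> t i * t i = 1 /\ s i * s i = 1) /\
  (forall i j, i < n.-1 -> j < n.-1 -> far i j ->
        s i * s j = s j * s i /\ t i * t j = t j * t i) /\
  (forall i, i.+1 < n.-1 ->
        s i * s i.+1 * s i = s i.+1 * s i * s i.+1 /\
        t i * t i.+1 * t i = t i.+1 * t i * t i.+1) /\
  (forall i j, i < n.-1 -> j < n.-1 -> far i j -> t i * s j * t i = s j) /\
  (forall i, i < n.-1 -> t i * s i * t i = s i) /\
  (forall i, i.+1 < n.-1 -> t i.+1 * s i * t i.+1 = s i.+1 * s i * s i.+1) /\
  (forall i, 0 < i -> i < n.-1 -> t i.-1 * s i * t i.-1 = s i.-1 * s i * s i.-1).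

(* (G; s, t) is presented by the relations Mrels: the relations hold, G is
   generated by the s_i, t_i, and for every group H and every family (a, b)
   in H satisfying the relations there is a homomorphism G -> H sending
   s_i to a_i and t_i to b_i (unique by generation). *)
Definition is_presentation (G : finGroupType) (n : nat) (s t : nat -> G) : Prop :=
  [/\ Mrels n s t,
      <<[set s i | i : 'I_n.-1] :|: [set t i | i : 'I_n.-1]>> = [set: G] &
      forall (H : groupType) (a b : nat -> H), Mrels n a b ->
        exists f : G -> H, {morph f : x y / x * y} /\
          (forall i, i < n.-1 -> f (s i) = a i /\ f (t i) = b i)].

(* Main.v *)
Require Import Defs.
From HB Require Import structures.
From mathcomp Require Import all_boot all_fingroup.
From mathcomp Require Import zify.
Set Implicit Arguments. Unset Strict Implicit. Unset Printing Implicit Defensive.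
Local Open Scope group_scope.

Definition ev (H : groupType) (a : nat -> H) (w : seq nat) : H :=
  foldr (fun i x => a i * x) 1 w.

Lemma ev_cat (H : groupType) (a : nat -> H) w1 w2 :
  ev a (w1 ++ w2) = ev a w1 * ev a w2.
Proof. elim: w1 => [|i w IH] /=; first by rewrite mul1g. by rewrite IH mulgA. Qed.

Definition Cox (H : groupType) (N : nat) (a : nat -> H) : Prop :=
  [/\ forall i, i < N -> a i * a i = 1,
      forall i j, i < N -> j < N -> far i j -> a i * a j = a j * a i &
      forall i, i.+1 < N -> a i * a i.+1 * a i = a i.+1 * a i * a i.+1].

Definition weq N w1 w2 :=
  forall (H : groupType) (a : nat -> H), Cox N a -> ev a w1 = ev a w2.

Lemma weq_refl N w : weq N w w. Proof. by []. Qed.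
Lemma weq_sym N w1 w2 : weq N w1 w2 -> weq N w2 w1.
Proof. by move=> h H a ha; rewrite (h H a ha). Qed.
Lemma weq_trans N w1 w2 w3 : weq N w1 w2 -> weq N w2 w3 -> weq N w1 w3.
Proof. by move=> h1 h2 H a ha; rewrite (h1 H a ha) (h2 H a ha). Qed.
Lemma weq_cat N w1 w2 w3 w4 : weq N w1 w2 -> weq N w3 w4 ->
  weq N (w1 ++ w3) (w2 ++ w4).
Proof. by move=> h1 h2 H a ha; rewrite !ev_cat (h1 H a ha) (h2 H a ha). Qed.
Lemma weq_cons N i w1 w2 : weq N w1 w2 -> weq N (i :: w1) (i :: w2).
Proof. by move=> h; apply: (@weq_cat N [:: i] [:: i]). Qed.

Lemma weq_ii N i : i < N -> weq N [:: i; i] [::].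
Proof. by move=> hi H a [h1 _ _] /=; rewrite !mulg1 h1. Qed.
Lemma weq_far N i j : i < N -> j < N -> far i j -> weq N [:: i; j] [:: j; i].
Proof. by move=> hi hj hf H a [_ h2 _] /=; rewrite !mulg1 h2. Qed.
Lemma weq_braid N i : i.+1 < N -> weq N [:: i; i.+1; i] [:: i.+1; i; i.+1].
Proof. by move=> hi H a [_ _ h3] /=; rewrite !mulg1 !mulgA h3. Qed.

Lemma weq_comm N x w : x < N -> all (fun j => (j < N) && far x j) w ->
  weq N (w ++ [:: x]) (x :: w).
Proof.
move=> hx; elim: w => [|j w IH] //= /andP[/andP[hj hf] hw].
apply: weq_trans (weq_cons j (IH hw)) _.
apply: (@weq_cat N [:: j; x] [:: x; j] w w) => //.
by apply: weq_far => //; move: hf; rewrite /far; lia.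
Qed.

Fixpoint dn k l := if l is l'.+1 then (k + l') :: dn k l' else [::].

Lemma dnS k l : dn k l.+1 = dn k.+1 l ++ [:: k].
Proof.
elim: l k => [|l IH] k /=; first by rewrite addn0.
by rewrite -IH /= addSnnS.
Qed.

Lemma dn_all (P : pred nat) k l : (forall j, k <= j < k + l -> P j) -> all P (dn k l).
Proof.
elim: l => [|l IH] h //=; apply/andP; split.
  by apply: h; lia.
by apply: IH => j hj; apply: h; lia.
Qed.

Lemma dn_shift N k l j : k + l <= N -> k <= j -> j.+1 < k + l ->
  weq N (dn k l ++ [:: j.+1]) (j :: dn k l).
Proof.
elim: l j => [|l IH] j hN hk hj; first by lia.
rewrite /=.
have [hlt|hge] := ltnP j.+1 (k + l).
  apply: weq_trans (weq_cons _ (IH j _ hk hlt)) _; first by lia.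
  apply: (@weq_cat N [:: k + l; j] [:: j; k + l] (dn k l) (dn k l)) => //.
  by apply: weq_far; rewrite /far; lia.
have ej : k + l = j.+1 by lia.
case: l IH hj hN ej hge => [|l] IH hj hN ej hge; first by lia.
rewrite /= ej.
have ej' : k + l = j by lia.
rewrite ej'.
apply: weq_trans (weq_cons _ (weq_cons _ (weq_comm _ _))) _.
- lia.
- apply: dn_all => i hi; apply/andP; split; [lia | rewrite /far; lia].
apply: (@weq_cat N [:: j.+1; j; j.+1] [:: j; j.+1; j] (dn k l) (dn k l)) => //.
by apply: weq_sym; apply: weq_braid; lia.
Qed.

Fixpoint nf ks := if ks is l :: ks' then nf ks' ++ dn ((size ks').+1 - l) l else [::].
Fixpoint valid ks := if ks is l :: ks' then (l <= (size ks').+1) && valid ks' else true.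

Lemma nf_cons l ks : nf (l :: ks) = nf ks ++ dn ((size ks).+1 - l) l.
Proof. by []. Qed.

Lemma nf_lt ks : valid ks -> all (fun j => j < size ks) (nf ks).
Proof.
elim: ks => [|l ks IH] //= /andP[hl hv]; rewrite all_cat; apply/andP; split.
  by apply: sub_all (IH hv) => j /=; lia.
by apply: dn_all => j; lia.
Qed.

Lemma nf_step N ks : valid ks -> size ks <= N -> forall i, i < size ks ->
  exists ks', [/\ valid ks', size ks' = size ks & weq N (nf ks ++ [:: i]) (nf ks')].
Proof.
elim: ks => [|l ks IH] //= /andP[hl hv] hN i hi.
set m0 := size ks in hl hN hi IH *.
case: l hl => [|l] hl.
  rewrite ?subn0 /= ?cats0.
  have [him|him] := ltnP i m0.
    have [ks' [hv' hs' hw]] := IH hv (ltnW hN) i him.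
    exists (0 :: ks'); rewrite /= hv' hs' ?subn0 ?cats0; split => //.
  have -> : i = m0 by lia.
  exists (1%N :: ks); rewrite /= hv ?subn1 /= ?addn0; split => //.
set k := m0.+1 - l.+1.
have hk : k + l.+1 = m0.+1 by rewrite /k; lia.
have [hik|hik] := ltnP k i.
  case: i hi hik => [|j] hi hik; first by lia.
  have hj : j < m0 by lia.
  have [ks' [hv' hs' hw]] := IH hv (ltnW hN) j hj.
  exists (l.+1 :: ks'); split; [rewrite /= hv' hs' ?andbT; lia | by rewrite /= hs' | ].
  rewrite nf_cons hs' -/m0 -/k -catA.
  refine (weq_trans (weq_cat (@weq_refl N (nf ks)) (@dn_shift N k l.+1 j _ _ _)) _); try lia.
  have -> : nf ks ++ j :: dn k l.+1 = (nf ks ++ [:: j]) ++ dn k l.+1 by rewrite -catA.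
  exact: weq_cat hw (weq_refl _).
have [eik|nik] := eqVneq i k.
  exists (l :: ks); split; [rewrite /= hv ?andbT; lia | by [] | ].
  rewrite nf_cons -/m0 dnS eik.
  have -> : m0.+1 - l = k.+1 by rewrite /k; lia.
  rewrite -!catA -[nf ks ++ dn k.+1 l]cats0 -catA.
  apply: weq_cat => //; apply: weq_cat => //; apply: weq_ii; lia.
have [eik1|nik1] := eqVneq i.+1 k.
  exists (l.+2 :: ks); split; [rewrite /= hv ?andbT; lia | by [] | ].
  rewrite nf_cons -/m0.
  have -> : m0.+1 - l.+2 = i by lia.
  rewrite -catA (dnS i l.+1) eik1; exact: weq_refl.
have hi0 : i < m0 by lia.
have [ks' [hv' hs' hw]] := IH hv (ltnW hN) i hi0.
exists (l.+1 :: ks'); split; [rewrite /= hv' hs' ?andbT; lia | by rewrite /= hs' | ].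
rewrite nf_cons hs' -/m0 -/k -catA.
refine (weq_trans (weq_cat (@weq_refl N (nf ks)) (@weq_comm N i (dn k l.+1) _ _)) _).
- lia.
- apply: dn_all => j hj; apply/andP; split; [lia | rewrite /far; lia].
have -> : nf ks ++ i :: dn k l.+1 = (nf ks ++ [:: i]) ++ dn k l.+1 by rewrite -catA.
exact: weq_cat hw (weq_refl _).
Qed.
Lemma normalize N w : all (fun j => j < N) w ->
  exists ks, [/\ valid ks, size ks = N & weq N w (nf ks)].
Proof.
elim/last_ind: w => [|w i IH].
  move=> _; exists (nseq N 0); split.
  - by elim: N => //= N ->.
  - by rewrite size_nseq.
  - have -> : nf (nseq N 0) = [::] by elim: N => //= N ->.
    exact: weq_refl.
rewrite all_rcons => /andP[hi hw].
have [ks [hv hs hw']] := IH hw.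
have his : i < size ks by rewrite hs.
have [ks' [hv' hs' hw'']] := nf_step hv (eq_leq hs) his.
exists ks'; split => //; first by rewrite hs'.
rewrite -cats1; refine (weq_trans _ hw''); apply: weq_cat => //.
Qed.

Lemma ev_rev (H : groupType) N (a : nat -> H) w : Cox N a -> all (fun j => j < N) w ->
  ev a w * ev a (rev w) = 1.
Proof.
move=> [h1 _ _]; elim: w => [|i w IH] /=; first by rewrite mulg1.
move=> /andP[hi hw]; rewrite rev_cons -cats1 ev_cat /= mulg1.
by rewrite -mulgA [ev a w * _]mulgA IH // mul1g h1.
Qed.

Section Sym.
Variable m : nat.

Lemma inord_eq x y : x <= m -> y <= m -> (inord x == inord y :> 'I_m.+1) = (x == y).
Proof.
move=> hx hy; apply/eqP/eqP => [h|->] //.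
by rewrite -(@inordK m x) // -(@inordK m y) // h.
Qed.

Lemma adjT_l i : adjT m.+1 i (inord i) = inord i.+1.
Proof. by rewrite /adjT tpermL. Qed.
Lemma adjT_r i : adjT m.+1 i (inord i.+1) = inord i.
Proof. by rewrite /adjT tpermR. Qed.
Lemma adjT_d i x : i < m -> x <= m -> x != i -> x != i.+1 ->
  adjT m.+1 i (inord x) = inord x.
Proof.
move=> hi hx h1 h2; rewrite /adjT tpermD //.
  by rewrite inord_eq //; [rewrite eq_sym | lia].
by rewrite inord_eq // eq_sym.
Qed.

Lemma adjT2 i : adjT m.+1 i * adjT m.+1 i = 1.
Proof. exact: tperm2. Qed.

Lemma conj_inv (G : finGroupType) (x y : G) : y * y = 1 -> x ^ y = y * x * y.
Proof. by move=> h; rewrite conjgE (mulg1_eq h) mulgA. Qed.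

Lemma adjT_J_far i j : i < m -> j < m -> far i j ->
  adjT m.+1 j ^ adjT m.+1 i = adjT m.+1 j.
Proof.
move=> hi hj hf; rewrite {1}/adjT tpermJ.
rewrite !adjT_d //; move: hf; rewrite /far; lia.
Qed.

Lemma adjT_braid i : i.+1 < m ->
  adjT m.+1 i * adjT m.+1 i.+1 * adjT m.+1 i =
  adjT m.+1 i.+1 * adjT m.+1 i * adjT m.+1 i.+1.
Proof.
move=> hi; rewrite -!conj_inv ?adjT2 //.
rewrite {1}/adjT tpermJ adjT_r [X in tperm _ X]adjT_d; try lia.
rewrite [adjT m.+1 i](_ : _ = tperm (inord i) (inord i.+1)) // tpermJ adjT_l adjT_d //; lia.
Qed.

Lemma Cox_adjT : Cox m (adjT m.+1).
Proof.
split.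
- by move=> i _; exact: adjT2.
- move=> i j hi hj hf; rewrite conjgC adjT_J_far //.
  by move: hf; rewrite /far; lia.
- exact: adjT_braid.
Qed.

Local Notation E := (ev (adjT m.+1)).

Lemma ev_fix x w : x <= m -> all (fun j => j.+1 < x) w -> E w (inord x) = inord x.
Proof.
move=> hx; elim: w => [|j w IH] /=; first by rewrite perm1.
move=> /andP[hj hw]; rewrite permM adjT_d ?IH //; lia.
Qed.

Lemma ev_dn k l : k + l <= m -> E (dn k l) (inord (k + l)) = inord k.
Proof.
elim: l => [|l IH] hl /=; first by rewrite addn0 perm1.
by rewrite permM addnS adjT_r IH //; lia.
Qed.

Lemma nf_inj ks : valid ks -> size ks <= m -> E (nf ks) = 1 -> nf ks = [::].
Proof.
elim: ks => [|l ks IH] //= /andP[hl hv] hs.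
rewrite ev_cat => he.
set k := (size ks).+1 - l.
have hfix : E (nf ks) (inord (size ks).+1) = inord (size ks).+1.
  apply: ev_fix => //; apply: sub_all (nf_lt hv) => j /=; lia.
have := congr1 (fun s : 'S_m.+1 => s (inord (size ks).+1)) he.
rewrite perm1 permM hfix.
have -> : (size ks).+1 = k + l by rewrite /k; lia.
rewrite addnK ev_dn; last by rewrite /k; lia.
move/eqP; rewrite inord_eq; [|rewrite /k; lia|rewrite /k; lia].
move/eqP => ekl.
have l0 : l = 0 by lia.
move: he; rewrite l0 /= mulg1 => he.
by rewrite IH //; lia.
Qed.

Lemma surj_aux p (s : 'S_m.+1) :
  (forall x, p <= x <= m -> s (inord x) = inord x) ->
  exists w, all (fun j => j.+1 < p) w /\ E w = s.
Proof.
elim: p s => [|p IH] s hs.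
  exists [::]; split => //=; apply/permP => y; rewrite perm1.
  by have := hs (val y); rewrite inord_val => ->; rewrite ?inord_val //; case: y => /=; lia.
have [hmp|hpm] := ltnP m p.
  have [w [hw ew]] := IH s (fun x hx => hs x ltac:(lia)).
  by exists w; split => //; apply: sub_all hw => j /=; lia.
set q := val (s (inord p)).
have hqm : q <= m by rewrite /q; case: (s _) => /= ? ?; lia.
have hsq : s (inord p) = inord q by rewrite /q inord_val.
have hqp : q <= p.
  rewrite leqNgt; apply/negP => hpq.
  have h1 := hs q ltac:(lia).
  have := perm_inj (etrans hsq (esym h1)).
  move/eqP; rewrite inord_eq //; lia.
set d := E (dn q (p - q)).
have hd : d (inord p) = inord q.
  by rewrite /d; have := @ev_dn q (p - q); rewrite subnKC //; apply; lia.
have hdfix : forall x, p < x <= m -> d (inord x) = inord x.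
  move=> x hx; apply: ev_fix; first by lia.
  by apply: dn_all => j; lia.
have ht : forall x, p <= x <= m -> (s * d^-1) (inord x) = inord x.
  move=> x hx; rewrite permM.
  have [exp|nxp] := eqVneq x p.
    by rewrite exp hsq -hd permK.
  rewrite hs; last by lia.
  by rewrite -{1}(hdfix x) ?permK //; lia.
have [w [hw ew]] := IH (s * d^-1) ht.
exists (w ++ dn q (p - q)); split.
  rewrite all_cat; apply/andP; split; first by apply: sub_all hw => j /=; lia.
  by apply: dn_all => j; lia.
by rewrite ev_cat ew mulgKV.
Qed.

Lemma surj (s : 'S_m.+1) : exists w, all (fun j => j < m) w /\ E w = s.
Proof.
have [w [hw ew]] := @surj_aux m.+1 s (fun x hx => ltac:(lia)).
by exists w; split.
Qed.

Lemma key w1 w2 : all (fun j => j < m) w1 -> all (fun j => j < m) w2 ->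
  E w1 = E w2 -> weq m w1 w2.
Proof.
move=> h1 h2 he.
have hw : all (fun j => j < m) (w1 ++ rev w2) by rewrite all_cat all_rev h1 h2.
have [ks [hv hs hwk]] := normalize hw.
have e1 : E (w1 ++ rev w2) = 1 by rewrite ev_cat he (ev_rev Cox_adjT h2).
have hnf : nf ks = [::].
  apply: nf_inj => //; first by rewrite hs.
  by rewrite -(hwk _ _ Cox_adjT).
move=> H a ha.
have := hwk H a ha; rewrite hnf ev_cat /= => /mulg1_eq e1'.
have := ev_rev ha h2 => /mulg1_eq e2'.
by apply: invg_inj; rewrite e1' e2'.
Qed.

End Sym.

Lemma conj_swap (H : groupType) (x y z : H) : x * x = 1 -> y * y = 1 ->
  y * z * y = x * z * x -> z * (x * y) = x * y * z.
Proof.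
move=> hx hy h.
have := congr1 (fun t => x * t * y) h.
rewrite -!mulgA hy mulg1 !mulgA hx mul1g => ->.
by [].
Qed.

Section Phi.
Variable m : nat.
Local Notation E := (ev (adjT m.+1)).

Lemma surjP (s : 'S_m.+1) : exists w, all (fun j => j < m) w && (E w == s).
Proof. by have [w [h1 h2]] := surj s; exists w; rewrite h1 h2 eqxx. Qed.

Definition wd (s : 'S_m.+1) := xchoose (surjP s).
Lemma wd_all s : all (fun j => j < m) (wd s).
Proof. by have /andP[] := xchooseP (surjP s). Qed.
Lemma wdE s : E (wd s) = s.
Proof. by have /andP[_ /eqP] := xchooseP (surjP s). Qed.

Definition phi (H : groupType) (a : nat -> H) (s : 'S_m.+1) := ev a (wd s).

Variables (H : groupType) (a : nat -> H).
Hypothesis ha : Cox m a.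

Lemma phiE w : all (fun j => j < m) w -> phi a (E w) = ev a w.
Proof. by move=> hw; apply: (key (wd_all _) hw (wdE _)). Qed.

Lemma phiM s t : phi a (s * t) = phi a s * phi a t.
Proof.
rewrite -{1}(wdE s) -{1}(wdE t) -ev_cat phiE ?ev_cat //.
by rewrite all_cat !wd_all.
Qed.

Lemma phi1 : phi a 1 = 1.
Proof. by have := @phiE [::] isT. Qed.

Lemma phiV s : phi a s^-1 = (phi a s)^-1.
Proof. by apply: esym; apply: mulg1_eq; rewrite -phiM mulgV phi1. Qed.

Lemma phi_adjT i : i < m -> phi a (adjT m.+1 i) = a i.
Proof.
move=> hi; have -> : adjT m.+1 i = E [:: i] by rewrite /= mulg1.
by rewrite phiE /= ?mulg1 ?hi.
Qed.
End Phi.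

Lemma ev_comm (H : groupType) m (a c : nat -> H) w1 w2 :
  (forall i j, i < m -> j < m -> a i * c j = c j * a i) ->
  all (fun j => j < m) w1 -> all (fun j => j < m) w2 ->
  ev a w1 * ev c w2 = ev c w2 * ev a w1.
Proof.
move=> hac h1 h2.
have h0 : forall i, i < m -> a i * ev c w2 = ev c w2 * a i.
  move=> i hi; elim: w2 h2 => [|j w IH] /=; first by rewrite mulg1 mul1g.
  move=> /andP[hj hw]; by rewrite mulgA hac // -!mulgA IH.
elim: w1 h1 => [|i w IH] /=; first by rewrite mulg1 mul1g.
move=> /andP[hi hw]; by rewrite -mulgA IH // !mulgA h0.
Qed.

Section Hom.
Variables (m : nat) (H : groupType) (a b : nat -> H).
Hypothesis hab : Mrels m.+1 a b.

Variable c : nat -> H.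
Hypothesis hcdef : forall i, c i = a i * b i.

Lemma Cox_a : Cox m a.
Proof.
case: hab => [r1 [r2 [r3 _]]]; split.
- by move=> i hi; case: (r1 i hi).
- by move=> i j hi hj hf; case: (r2 i j hi hj hf).
- by move=> i hi; case: (r3 i hi).
Qed.

Lemma Cox_b : Cox m b.
Proof.
case: hab => [r1 [r2 [r3 _]]]; split.
- by move=> i hi; case: (r1 i hi).
- by move=> i j hi hj hf; case: (r2 i j hi hj hf).
- by move=> i hi; case: (r3 i hi).
Qed.

Lemma ac_comm i j : i < m -> j < m -> a j * c i = c i * a j.
Proof.
case: hab => [r1 [r2 [r3 [r4 [r5 [r6 r7]]]]]] hi hj.
have [hb ha] := r1 i hi.
have [haj _] := r1 j hj.
rewrite hcdef; apply: conj_swap => //.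
have [hf|hnf] := boolP (far i j).
  rewrite r4 //; have [-> _] := r2 i j hi hj hf.
  by rewrite -mulgA ha mulg1.
have [eij|nij] := eqVneq i j.
  by rewrite -eij r5 // ha mul1g.
have [e1|n1] := eqVneq j i.+1.
  have := r7 j ltac:(lia) hj; rewrite e1 /= => ->; by [].
have e2 : i = j.+1 by move: hnf; rewrite /far; lia.
have := r6 j ltac:(lia); rewrite -e2 => ->; by [].
Qed.

Lemma ev_b w : all (fun j => j < m) w -> ev b w = ev a w * ev c w.
Proof.
elim: w => [|i w IH] /=; first by rewrite mulg1.
move=> /andP[hi hw]; rewrite IH //.
have hbi : b i = a i * c i.
  by rewrite hcdef mulgA; case: hab => [r1 _]; have [_ ->] := r1 i hi; rewrite mul1g.
have hc : c i * ev a w = ev a w * c i.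
  have := @ev_comm H m a c w [:: i] (fun x y hx hy => ac_comm hy hx) hw.
  by rewrite /= hi mulg1 => /(_ isT).
rewrite hbi.
by rewrite -!mulgA [c i * (ev a w * _)]mulgA hc !mulgA.
Qed.

Lemma ev_c w1 w2 : all (fun j => j < m) w1 -> all (fun j => j < m) w2 ->
  ev a w1 = ev a w2 -> ev b w1 = ev b w2 -> ev c w1 = ev c w2.
Proof.
move=> h1 h2 ea eb; move: eb; rewrite !ev_b // ea; exact: mulgI.
Qed.

Lemma Cox_c : Cox m c.
Proof.
have [a1 a2 a3] := Cox_a; have [b1 b2 b3] := Cox_b.
split.
- move=> i hi; have := @ev_c [:: i; i] [::] ltac:(by rewrite /= hi) isT.
  by rewrite /= !mulg1 a1 // b1 //; apply.
- move=> i j hi hj hf; have := @ev_c [:: i; j] [:: j; i] ltac:(by rewrite /= hi hj) ltac:(by rewrite /= hi hj).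
  by rewrite /= !mulg1 a2 // b2 //; apply.
- move=> i hi.
  have hi' : i < m by lia.
  have := @ev_c [:: i; i.+1; i] [:: i.+1; i; i.+1] ltac:(by rewrite /= hi hi') ltac:(by rewrite /= hi hi').
  by rewrite /= !mulg1 !mulgA a3 // b3 //; apply.
Qed.

End Hom.

Lemma grp_lemma (H : groupType) (p q r s t z : H) :
  q * r = r * q -> s * q = q * s -> s * t = t * s ->
  p * q * (r * s) * (q^-1 * (t * q) * z) = p * r * t * (q * s * z).
Proof.
move=> qr sq st.
have sq' : s * q^-1 = q^-1 * s.
  by apply: (mulIg q); rewrite -!mulgA mulVg mulg1 sq mulKg.
rewrite !mulgA -[p * q * r * s * q^-1]mulgA sq' !mulgA.
rewrite -[p * q * r * q^-1 * s * t]mulgA st !mulgA.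
rewrite -[p * q * r]mulgA qr !mulgA mulgK.
by rewrite -[p * r * t * s * q]mulgA sq !mulgA.
Qed.

Lemma ev_mem (G : finGroupType) m (g : nat -> G) (X : {set G}) w :
  (forall i, i < m -> g i \in X) -> all (fun j => j < m) w -> ev g w \in <<X>>.
Proof.
move=> hX; elim: w => [|i w IH] /=; first by rewrite group1.
by move=> /andP[hi hw]; rewrite groupM ?IH // mem_gen // hX.
Qed.

Section Main.
Variable m : nat.
Local Notation to := (conjg_groupAction (perm_of 'I_m.+1)).
Local Notation E := (ev (adjT m.+1)).

Lemma s1_val x : val (sdpair1 to x) = (1, x).
Proof. by rewrite val_insubd inE !in_setT. Qed.
Lemma s2_val x : val (sdpair2 to x) = (x, 1).
Proof. by rewrite val_insubd inE !in_setT. Qed.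

Lemma s1M x y : sdpair1 to (x * y) = sdpair1 to x * sdpair1 to y.
Proof. by apply: sdpair1_morphM; rewrite inE. Qed.
Lemma s2M x y : sdpair2 to (x * y) = sdpair2 to x * sdpair2 to y.
Proof. by apply: sdpair2_morphM; rewrite inE. Qed.

Lemma tst x y : x * x = 1 ->
  sdpair2 to x * sdpair1 to y * sdpair2 to x = sdpair1 to (x * y * x).
Proof.
move=> hx.
have hx2 : (sdpair2 to x)^-1 = sdpair2 to x.
  by apply: mulg1_eq; rewrite -s2M hx morph1.
rewrite -(conj_inv y hx) (_ : y ^ x = to y x) // sdpair_act ?inE // conjgE hx2 mulgA //.
Qed.

Lemma s1_ev w : sdpair1 to (E w) = ev (sgen m.+1) w.
Proof. by elim: w => [|i w IH] /=; rewrite ?morph1 // s1M IH. Qed.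
Lemma s2_ev w : sdpair2 to (E w) = ev (tgen m.+1) w.
Proof. by elim: w => [|i w IH] /=; rewrite ?morph1 // s2M IH. Qed.

Lemma Mrels_G : Mrels m.+1 (sgen m.+1) (tgen m.+1).
Proof.
have [c1 c2 c3] := Cox_adjT m.
rewrite /Mrels /=; split; [|split; [|split; [|split; [|split; [|split]]]]].
- by move=> i hi; rewrite /sgen /tgen -s1M -s2M c1 // !morph1.
- by move=> i j hi hj hf; rewrite /sgen /tgen -!s1M -!s2M c2.
- by move=> i hi; rewrite /sgen /tgen -!s1M -!s2M c3.
- move=> i j hi hj hf; rewrite /sgen /tgen tst ?(c1 i hi) //.
  by rewrite -(conj_inv _ (c1 i hi)) adjT_J_far.
- by move=> i hi; rewrite /sgen /tgen tst (c1 i hi) // mul1g.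
- by move=> i hi; rewrite /sgen /tgen tst ?(c1 i.+1 hi) // !s1M.
- move=> i hi0 hi; rewrite /sgen /tgen tst ?s1M //; apply: c1; lia.
Qed.

Lemma gen_G : <<[set sgen m.+1 i | i : 'I_m] :|: [set tgen m.+1 i | i : 'I_m]>> = [set: Mn m.+1].
Proof.
apply/eqP; rewrite eqEsubset subsetT /=; apply/subsetP => u _.
rewrite [u]sdpairE.
have [w1 [hw1 e1]] := surj u.1.
have [w2 [hw2 e2]] := surj u.2.
rewrite -e1 -e2 s1_ev s2_ev groupM //.
  apply: ev_mem hw1 => i hi; rewrite inE; apply/orP; right.
  by apply/imsetP; exists (Ordinal hi).
apply: ev_mem hw2 => i hi; rewrite inE; apply/orP; left.
by apply/imsetP; exists (Ordinal hi).
Qed.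

Lemma hom_G (H : groupType) (a b : nat -> H) : Mrels m.+1 a b ->
  exists f : Mn m.+1 -> H, {morph f : x y / x * y} /\
    (forall i, i < m.+1.-1 -> f (sgen m.+1 i) = a i /\ f (tgen m.+1 i) = b i).
Proof.
move=> hab.
pose c i := a i * b i.
have hc : Cox m c := @Cox_c m H a b hab c (fun _ => erefl).
have ha : Cox m a := Cox_a hab.
have hac : forall x y : 'S_m.+1, phi a x * phi c y = phi c y * phi a x.
  move=> x y; apply: (@ev_comm H m) => //; last exact: wd_all.
    by move=> i j hi hj; exact: (@ac_comm m H a b hab c (fun _ => erefl) j i hj hi).
  exact: wd_all.
exists (fun u : Mn m.+1 => phi a u.1 * phi c u.1 * phi a u.2); split.
  move=> u v.
  change ((u * v).1) with (u.1 * v.1); change ((u * v).2) with (u.2 ^ v.1 * v.2).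
  rewrite !phiM // phiV //.
  by apply: grp_lemma; rewrite hac.
move=> i hi /=.
rewrite /sgen /tgen.
have -> : (sdpair1 to (adjT m.+1 i)).1 = 1 by rewrite s1_val.
have -> : (sdpair1 to (adjT m.+1 i)).2 = adjT m.+1 i by rewrite s1_val.
have -> : (sdpair2 to (adjT m.+1 i)).1 = adjT m.+1 i by rewrite s2_val.
have -> : (sdpair2 to (adjT m.+1 i)).2 = 1 by rewrite s2_val.
rewrite !phi1 // !phi_adjT // !mul1g !mulg1; split => //.
rewrite /c /= mulgA.
by case: hab => [r1 _]; have [_ ->] := r1 i hi; rewrite mul1g.
Qed.

End Main.

Lemma S0_triv (s : 'S_0) : s = 1.
Proof. by apply/permP => x; case: x. Qed.

Theorem proposition7p2 (n : nat) : is_presentation n (sgen n) (tgen n).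
Proof.
case: n => [|m].
  split.
  - rewrite /Mrels /=; do !split; move=> *; lia.
  - apply/eqP; rewrite eqEsubset subsetT /=; apply/subsetP => u _.
    by rewrite [u]sdpairE (S0_triv u.1) (S0_triv u.2) !morph1 mulg1 group1.
  - move=> H a b _; exists (fun _ => 1); split; first by move=> x y; rewrite mulg1.
    by move=> i /=; lia.
split; [exact: Mrels_G | exact: gen_G | exact: hom_G].
Qed.
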